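(* Let $R$ be an integral domain, $p,q\in R$, $m\ge1$ an integer, and let $a=(a_n)_{n\ge0}$ be a linear recurrent sequence over $R$ with characteristic polynomial $(t^2-pt+q)^m$. Then $L^{(-1,p)}(a)$ is a linear recurrent sequence with the same characteristic polynomial $(t^2-pt+q)^m$.
   Context: A sequence $(a_n)$ is linear recurrent with characteristic polynomial $t^d-c_1t^{d-1}-\dots-c_d$ if $a_{n+d}=c_1a_{n+d-1}+\dots+c_da_n$ for all $n\ge0$. For $h,y\in R$, $L^{(h,y)}(a)$ is the sequence $b$ with $b_n=\sum_{i=0}^n\binom{n}{i}h^iy^{n-i}a_i$; thus $(L^{(-1,p)}(a))_n=\sum_{i=0}^n\binom{n}{i}(-1)^ip^{n-i}a_i$. *)

(* Defs.v *)
From mathcomp Require Import all_boot all_algebra.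
Set Implicit Arguments. Unset Strict Implicit. Unset Printing Implicit Defensive.
Import GRing.Theory.
Local Open Scope ring_scope.

(* A sequence a : nat -> R is linear recurrent with (monic) characteristic
   polynomial P = t^d - c_1 t^(d-1) - ... - c_d  (d = size P - 1) iff
   a_(n+d) = c_1 a_(n+d-1) + ... + c_d a_n for all n, i.e. iff
   sum_(i <= d) P_i a_(n+i) = 0 for all n. *)
Definition linrec (R : nzRingType) (P : {poly R}) (a : nat -> R) : Prop :=
  P \is monic /\
  forall n : nat, \sum_(i < size P) P`_i * a (n + i)%N = 0.

Definition Ltrans (R : nzRingType) (h y : R) (a : nat -> R) : nat -> R :=
  fun n => \sum_(i < n.+1) ('C(n, i))%:R * (h ^+ i) * (y ^+ (n - i)) * a i.

(* Main.v *)
Require Import Defs.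
From mathcomp Require Import all_boot all_algebra.
From mathcomp Require Import ring.
Import GRing.Theory.
Local Open Scope ring_scope.
Set Implicit Arguments.

Section Aux.
Variable R : comNzRingType.

Definition phi (a : nat -> R) (P : {poly R}) : R :=
  \sum_(i < size P) P`_i * a i.

Lemma phi_widen a (P : {poly R}) N : (size P <= N)%N -> phi a P = \sum_(i < N) P`_i * a i.
Proof.
move=> hN; rewrite /phi (big_ord_widen _ (fun i => P`_i * a i) hN) big_mkcond /=.
apply: eq_bigr => i _; case: ifP => // /negbT; rewrite -leqNgt => h.
by rewrite nth_default // mul0r.
Qed.

Lemma phiD a : {morph phi a : x y / x + y >-> x + y}.
Proof.
move=> x y; rewrite (@phi_widen _ _ (maxn (size x) (size y))) ?size_polyD //.
rewrite (@phi_widen _ x (maxn (size x) (size y))) ?leq_maxl //.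
rewrite (@phi_widen _ y (maxn (size x) (size y))) ?leq_maxr //.
by rewrite -big_split /=; apply: eq_bigr => i _; rewrite coefD mulrDl.
Qed.

Lemma phi0 a : phi a 0 = 0.
Proof. by rewrite /phi size_poly0 big_ord0. Qed.

Lemma phiZ a c (P : {poly R}) : phi a (c *: P) = c * phi a P.
Proof.
rewrite (@phi_widen _ _ (size P)) ?size_scale_leq // /phi mulr_sumr.
by apply: eq_bigr => i _; rewrite coefZ mulrA.
Qed.

Lemma phi_sum a I (r : seq I) (F : I -> {poly R}) :
  phi a (\sum_(i <- r) F i) = \sum_(i <- r) phi a (F i).
Proof. exact: (big_morph (phi a) (phiD a) (phi0 a)). Qed.

Lemma phiX a (P : {poly R}) : phi a (P * 'X) = phi (fun i => a i.+1) P.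
Proof.
have hs : (size (P * 'X)%R <= (size P).+1)%N.
  by rewrite (leq_trans (size_polyMleq _ _)) // size_polyX addn2.
rewrite (@phi_widen a _ _ hs) big_ord_recl coefMX eqxx mul0r add0r.
by apply: eq_bigr => i _; rewrite coefMX /=.
Qed.

Lemma phi_ext a b (P : {poly R}) : (forall i, a i = b i) -> phi a P = phi b P.
Proof. by move=> h; apply: eq_bigr => i _; rewrite h. Qed.

Lemma phiXn a n : phi a 'X^n = a n.
Proof.
rewrite /phi size_polyXn big_ord_recr /= coefXn eqxx mul1r big1 ?add0r //.
by move=> i _; rewrite coefXn (ltn_eqF (ltn_ord i)) mul0r.
Qed.

Lemma vanish (Q S : {poly R}) : forall a, (forall n, phi (fun i => a (n + i)%N) Q = 0) ->
  phi a (S * Q) = 0.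
Proof.
elim/poly_ind: S => [|S c IH] a h; first by rewrite mul0r phi0.
rewrite mulrDl -mulrA (mulrC 'X) mulrA phiD phiX mul_polyC phiZ.
rewrite (IH (fun i => a i.+1)) ?add0r.
  by rewrite (@phi_ext _ (fun i => a (0 + i)%N)) ?h ?mulr0.
move=> n; rewrite (@phi_ext _ (fun i => a (n.+1 + i)%N)) //.
Qed.

End Aux.

Theorem corollary13 (R : idomainType) (p q : R) (m : nat) (a : nat -> R) :
  (1 <= m)%N ->
  linrec (('X ^+ 2 - p *: 'X + q%:P) ^+ m) a ->
  linrec (('X ^+ 2 - p *: 'X + q%:P) ^+ m) (Ltrans (-1) p a).
Proof.
move=> _ [hmon ha]; split => // n.
set T := 'X ^+ 2 - p *: 'X + q%:P.
set Q := T ^+ m.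
set Y := p%:P - 'X.
have hb : forall k, Ltrans (-1) p a k = phi a (Y ^+ k).
  move=> k; rewrite /Y exprBn phi_sum /Ltrans.
  apply: eq_bigr => i _.
  have -> : (-1) ^+ i * p%:P ^+ (k - i) * 'X^i *+ 'C(k, i)
      = ('C(k, i)%:R * (-1) ^+ i * p ^+ (k - i)) *: ('X^i : {poly R}).
    rewrite -mul_polyC !rmorphM /= !rmorphXn /= rmorphN1 rmorph_nat -mulr_natl.
    ring.
  by rewrite phiZ phiXn.
have hT : T \Po Y = T.
  rewrite /T /Y comp_polyD comp_polyB comp_polyZ comp_polyX comp_polyC comp_Xn_poly.
  rewrite -!mul_polyC; ring.
have hQ : Q \Po Y = Q.
  rewrite /Q; elim: (m) => [|k IH]; first by rewrite !expr0 comp_polyC.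
  by rewrite !exprS comp_polyM IH hT.
have -> : \sum_(i < size Q) Q`_i * Ltrans (-1) p a (n + i)%N
         = phi a (Y ^+ n * (Q \Po Y)).
  rewrite comp_polyE mulr_sumr phi_sum.
  apply: eq_bigr => i _; rewrite hb -scalerAr -exprD phiZ //.
rewrite hQ; apply: vanish => k.
by rewrite /phi; apply: ha.
Qed.
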